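(* Let $\theta$ be the parameters of an Elman RNN with $L$ layers such that every bias vector $\mathbf{b}^\ell$ ($0\le\ell\le L-1$) has all entries nonzero. Define $$\|\theta\|_2^2=\|\mathbf{W}_{\mathrm{ff}}^{L-1}\|_F^2+\|\mathbf{b}^{L-1}\|^2+\sum_{0<\ell<L}\left(\|\mathbf{W}_{\mathrm{rec}}^{\ell}\|_F^2+\|\mathbf{W}_{\mathrm{ff}}^{\ell-1}\|_F^2+\|\mathbf{b}^{\ell-1}\|^2\right),$$ and let $\mathcal{X}(\theta)$ be the set of $\theta'$ that minimize $\|\theta'\|_2$ subject to $\theta'=\mathcal{P}(\theta)$ for some $\mathcal{P}\in\mathcal{G}_{\mathrm{scaled}}$. Then for every $\theta',\theta''\in\mathcal{X}(\theta)$ there exists $\mathcal{P}\in\mathcal{G}_{\mathrm{perm}}$ (a transformation by unscaled permutations only) such that $\theta'=\mathcal{P}(\theta'')$.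
   Context: Elman RNN: parameters $\theta=(\mathbf{W}_{\mathrm{rec}}^{\ell+1},\mathbf{W}_{\mathrm{ff}}^{\ell},\mathbf{b}^{\ell})_{0\le\ell\le L-1}$ with $\mathbf{W}_{\mathrm{ff}}^{\ell}\in\mathbb{R}^{d_{\ell+1}\times d_\ell}$, $\mathbf{W}_{\mathrm{rec}}^{\ell+1}\in\mathbb{R}^{d_{\ell+1}\times d_{\ell+1}}$, $\mathbf{b}^\ell\in\mathbb{R}^{d_{\ell+1}}$. $\mathcal{G}_{\mathrm{lin}}$ is the set of sequences $\mathcal{P}=(\mathbf{P}^0,\dots,\mathbf{P}^L)$ with $\mathbf{P}^0=\mathbf{I}_{d_0}$, $\mathbf{P}^L=\mathbf{I}_{d_L}$ and $\mathbf{P}^\ell$ invertible $d_\ell\times d_\ell$ for $1\le\ell\le L-1$; it acts on $\theta$ by replacing, for each $1\le\ell\le L$, $(\mathbf{W}_{\mathrm{rec}}^{\ell},\mathbf{W}_{\mathrm{ff}}^{\ell-1},\mathbf{b}^{\ell-1})$ with $(\mathbf{P}^\ell\mathbf{W}_{\mathrm{rec}}^{\ell}(\mathbf{P}^\ell)^{-1},\ \mathbf{P}^\ell\mathbf{W}_{\mathrm{ff}}^{\ell-1}(\mathbf{P}^{\ell-1})^{-1},\ \mathbf{P}^\ell\mathbf{b}^{\ell-1})$, giving $\mathcal{P}(\theta)$. $\mathcal{G}_{\mathrm{perm}}\subset\mathcal{G}_{\mathrm{lin}}$: all $\mathbf{P}^\ell$ ($1\le\ell\le L-1$) are permutation matrices.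 $\mathcal{G}_{\mathrm{scaled}}\subset\mathcal{G}_{\mathrm{lin}}$: each $\mathbf{P}^\ell=\tilde{\mathbf{P}}^\ell\mathbf{D}^\ell$ with $\tilde{\mathbf{P}}^\ell$ a permutation matrix and $\mathbf{D}^\ell$ diagonal with strictly positive diagonal entries. *)

(* Defs.v *)
From HB Require Import structures.
From mathcomp Require Import all_boot all_order all_algebra.
From mathcomp Require Import perm.
From mathcomp Require Import reals.
Set Implicit Arguments. Unset Strict Implicit. Unset Printing Implicit Defensive.
Import Order.TTheory GRing.Theory Num.Theory.
Local Open Scope ring_scope.

(* Only the indices in range are meaningful:
     Wff l  : d(l+1) x d l      for 0 <= l <= L-1   (W_ff^l)
     Wrec l : d l x d l         for 1 <= l <= L     (W_rec^l)
     bias l : d(l+1) column     for 0 <= l <= L-1   (b^l)          *)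
Record rnn (R : Type) (d : nat -> nat) := RNN {
  Wff  : forall l : nat, 'M[R]_(d l.+1, d l);
  Wrec : forall l : nat, 'M[R]_(d l);
  bias : forall l : nat, 'cV[R]_(d l.+1)
}.

Definition rnn_eq (R : Type) (d : nat -> nat) (L : nat) (t1 t2 : rnn R d) : Prop :=
  forall l, (l < L)%N ->
    Wff t1 l = Wff t2 l /\ Wrec t1 l.+1 = Wrec t2 l.+1 /\ bias t1 l = bias t2 l.

Definition mxseq (R : Type) (d : nat -> nat) := forall l : nat, 'M[R]_(d l).

Definition in_Glin (R : comUnitRingType) (d : nat -> nat) (L : nat) (P : mxseq R d) : Prop :=
  P 0%N = 1%:M /\ P L = 1%:M /\
  (forall l, (0 < l < L)%N -> P l \in unitmx).

Definition in_Gperm (R : comUnitRingType) (d : nat -> nat) (L : nat) (P : mxseq R d) : Prop :=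
  in_Glin L P /\ (forall l, (0 < l < L)%N -> is_perm_mx (P l)).

Definition in_Gscaled (R : numFieldType) (d : nat -> nat) (L : nat) (P : mxseq R d) : Prop :=
  in_Glin L P /\
  (forall l, (0 < l < L)%N ->
     exists (s : 'S_(d l)) (D : 'rV[R]_(d l)),
       (forall i, 0 < D 0 i) /\ P l = perm_mx s *m diag_mx D).

Definition rnn_act (R : comUnitRingType) (d : nat -> nat) (P : mxseq R d) (t : rnn R d) : rnn R d :=
  @RNN R d
    (fun l => P l.+1 *m Wff t l *m invmx (P l))
    (fun l => P l *m Wrec t l *m invmx (P l))
    (fun l => P l.+1 *m bias t l).

Definition frob2 (R : ringType) (m n : nat) (A : 'M[R]_(m, n)) : R :=
  \sum_(i < m) \sum_(j < n) A i j ^+ 2.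

(* ||theta||_2^2 as in the paper (note: W_rec^L is not included). *)
Definition rnn_norm2 (R : ringType) (d : nat -> nat) (L : nat) (t : rnn R d) : R :=
  frob2 (Wff t L.-1) + frob2 (bias t L.-1) +
  \sum_(1 <= l < L) (frob2 (Wrec t l) + frob2 (Wff t l.-1) + frob2 (bias t l.-1)).

Definition rnn_norm (R : realType) (d : nat -> nat) (L : nat) (t : rnn R d) : R :=
  Num.sqrt (rnn_norm2 L t).

Definition in_X (R : realType) (d : nat -> nat) (L : nat) (t t' : rnn R d) : Prop :=
  (exists P : mxseq R d, in_Gscaled L P /\ rnn_eq L t' (rnn_act P t)) /\
  (forall P : mxseq R d, in_Gscaled L P -> rnn_norm L t' <= rnn_norm L (rnn_act P t)).

(* Main.v *)
Require Import Defs.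
From HB Require Import structures.
From mathcomp Require Import all_boot all_order all_algebra.
From mathcomp Require Import perm reals ring lra.
From Stdlib Require Import FunctionalExtensionality.
Set Implicit Arguments. Unset Strict Implicit. Unset Printing Implicit Defensive.
Import Order.TTheory GRing.Theory Num.Theory.
Local Open Scope ring_scope.

Section S.
Variable R : realType.

Lemma frob2_ge0 m n (A : 'M[R]_(m,n)) : 0 <= frob2 A.
Proof. by apply: sumr_ge0 => i _; apply: sumr_ge0 => j _; apply: sqr_ge0. Qed.

Lemma frob2_eq0 m n (A : 'M[R]_(m,n)) : frob2 A = 0 -> forall i j, A i j = 0.
Proof.
move=> /eqP; rewrite /frob2 psumr_eq0 => [/allP H i0 j0|i _]; last first.
  by apply: sumr_ge0 => j _; apply: sqr_ge0.
have /implyP := H i0 (mem_index_enum _) => /(_ isT).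
rewrite psumr_eq0 => [/allP H2|j _]; last exact: sqr_ge0.
have /implyP := H2 j0 (mem_index_enum _) => /(_ isT).
by rewrite sqrf_eq0 => /eqP.
Qed.

Lemma frob2_perml m n (s : 'S_m) (A : 'M[R]_(m,n)) : frob2 (perm_mx s *m A) = frob2 A.
Proof.
rewrite -row_permE /frob2 [RHS](reindex_inj (@perm_inj _ s)) /=.
by apply: eq_bigr => i _; apply: eq_bigr => j _; rewrite mxE.
Qed.

Lemma frob2_permr m n (s : 'S_n) (A : 'M[R]_(m,n)) : frob2 (A *m perm_mx s) = frob2 A.
Proof.
rewrite -[s]invgK -col_permE /frob2.
apply: eq_bigr => i _; rewrite [RHS](reindex_inj (@perm_inj _ s^-1)) /=.
by apply: eq_bigr => j _; rewrite mxE.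
Qed.

Lemma invmx_eq n (A B : 'M[R]_n) : A *m B = 1%:M -> invmx A = B.
Proof.
move=> AB; have [uA _] := mulmx1_unit AB.
by rewrite -[RHS](mulKmx uA B) AB mulmx1.
Qed.

Definition Dinv n (D : 'rV[R]_n) : 'rV[R]_n := \row_j (D 0 j)^-1.

Lemma invmx_pd n (s : 'S_n) (D : 'rV[R]_n) : (forall i, D 0 i != 0) ->
  invmx (perm_mx s *m diag_mx D) = diag_mx (Dinv D) *m perm_mx s^-1.
Proof.
move=> HD; apply: invmx_eq.
rewrite -mulmxA (mulmxA (diag_mx D)) mulmx_diag.
have -> : \row_j (D 0 j * Dinv D 0 j) = const_mx 1.
  by apply/matrixP => i j; rewrite !mxE divff.
by rewrite diag_const_mx mul1mx -perm_mxM mulgV perm_mx1.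
Qed.

Lemma frob2_act m n (s1 : 'S_m) (s0 : 'S_n) (D1 : 'rV[R]_m) (D0 : 'rV[R]_n)
  (A : 'M[R]_(m,n)) : (forall i, D0 0 i != 0) ->
  frob2 (perm_mx s1 *m diag_mx D1 *m A *m invmx (perm_mx s0 *m diag_mx D0)) =
  frob2 (\matrix_(i,j) (D1 0 i * A i j / D0 0 j)).
Proof.
move=> HD; rewrite invmx_pd // !mulmxA frob2_permr -!mulmxA frob2_perml.
rewrite mulmxA mul_diag_mx mul_mx_diag /frob2.
by apply: eq_bigr => i _; apply: eq_bigr => j _; rewrite !mxE.
Qed.

Lemma frob2_actb m (s1 : 'S_m) (D1 : 'rV[R]_m) (b : 'cV[R]_m) :
  frob2 (perm_mx s1 *m diag_mx D1 *m b) = frob2 (\col_i (D1 0 i * b i 0)).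
Proof.
rewrite -mulmxA frob2_perml mul_diag_mx /frob2.
by apply: eq_bigr => i _; apply: eq_bigr => j _; rewrite !mxE ord1.
Qed.


Lemma frob2_gap m n (A B C : 'M[R]_(m,n)) :
  (forall i j, C i j ^+ 2 = A i j * B i j) ->
  frob2 A + frob2 B = frob2 C *+ 2 + frob2 (A - B).
Proof.
move=> H; rewrite /frob2 -big_split -sumrMnl -big_split /=.
apply: eq_bigr => i _; rewrite -big_split -sumrMnl -big_split /=.
apply: eq_bigr => j _; rewrite H !mxE; ring.
Qed.

Definition Dv n (P : 'M[R]_n) : 'rV[R]_n := \row_j \sum_i P i j.

Lemma DvE n (s : 'S_n) (D : 'rV[R]_n) : Dv (perm_mx s *m diag_mx D) = D.
Proof.
apply/matrixP => a j; rewrite ord1 mxE -row_permE.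
under eq_bigr do rewrite mxE.
rewrite (reindex_inj (@perm_inj _ s^-1)) /=.
under eq_bigr do rewrite permKV.
rewrite (bigD1 j) //= big1 ?addr0 => [|i /negPf Hi]; rewrite mxE ?eqxx //.
by rewrite Hi.
Qed.

Lemma unit_pd n (s : 'S_n) (D : 'rV[R]_n) : (forall i, D 0 i != 0) ->
  perm_mx s *m diag_mx D \in unitmx.
Proof.
move=> HD; have H : (perm_mx s *m diag_mx D) *m (diag_mx (Dinv D) *m perm_mx s^-1) = 1%:M.
  rewrite -mulmxA (mulmxA (diag_mx D)) mulmx_diag.
  have -> : \row_j (D 0 j * Dinv D 0 j) = const_mx 1.
    by apply/matrixP => i j; rewrite !mxE divff.
  by rewrite diag_const_mx mul1mx -perm_mxM mulgV perm_mx1.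
by case: (mulmx1_unit H).
Qed.

Lemma invmxM n (A B : 'M[R]_n) : A \in unitmx -> B \in unitmx ->
  invmx (A *m B) = invmx B *m invmx A.
Proof.
move=> uA uB; apply: invmx_eq.
by rewrite mulmxA -(mulmxA A) mulmxV // mulmx1 mulmxV.
Qed.

Lemma entry_rel (a1 a2 b1 b2 w : R) : 0 < a1 -> 0 < a2 -> 0 < b1 -> 0 < b2 ->
  (Num.sqrt (a1 * a2) * w / Num.sqrt (b1 * b2)) ^+ 2 = (a1 * w / b1) * (a2 * w / b2).
Proof.
move=> h1 h2 h3 h4.
rewrite expr_div_n exprMn !sqr_sqrtr ?mulr_ge0 ?ltW //.
field; apply/andP; split; rewrite gt_eqF //.
Qed.

Lemma entry_relb (a1 a2 w : R) : 0 < a1 -> 0 < a2 ->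
  (Num.sqrt (a1 * a2) * w) ^+ 2 = (a1 * w) * (a2 * w).
Proof.
move=> h1 h2; rewrite exprMn !sqr_sqrtr ?mulr_ge0 ?ltW //; ring.
Qed.

End S.
Section T.
Variable R : realType.
Variable d : nat -> nat.
Variable L : nat.
Hypothesis hL : (0 < L)%N.

Definition scale (del : forall l, 'rV[R]_(d l)) (t : rnn R d) : rnn R d :=
  @RNN R d (fun l => \matrix_(i,j) (del l.+1 0 i * Wff t l i j / del l 0 j))
           (fun l => \matrix_(i,j) (del l 0 i * Wrec t l i j / del l 0 j))
           (fun l => \col_i (del l.+1 0 i * bias t l i 0)).

Definition rsub (t1 t2 : rnn R d) : rnn R d :=
  @RNN R d (fun l => Wff t1 l - Wff t2 l) (fun l => Wrec t1 l - Wrec t2 l)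
           (fun l => bias t1 l - bias t2 l).

Lemma norm2_ext (t1 t2 : rnn R d) :
  (forall l, (l < L)%N -> frob2 (Wff t1 l) = frob2 (Wff t2 l) /\
     frob2 (Wrec t1 l.+1) = frob2 (Wrec t2 l.+1) /\
     frob2 (bias t1 l) = frob2 (bias t2 l)) ->
  rnn_norm2 L t1 = rnn_norm2 L t2.
Proof.
move=> H; rewrite /rnn_norm2.
have hL1 : (L.-1 < L)%N by rewrite prednK.
have [-> [_ ->]] := H _ hL1.
congr (_ + _); apply: eq_big_nat => l /andP[h1 h2].
have hl : (l.-1 < L)%N by rewrite (leq_ltn_trans (leq_pred l)).
have [e1 [e2 e3]] := H _ hl.
by rewrite prednK in e2 => //; rewrite e1 e2 e3.
Qed.

Lemma norm2_eq (t1 t2 : rnn R d) : rnn_eq L t1 t2 -> rnn_norm2 L t1 = rnn_norm2 L t2.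
Proof.
move=> H; apply: norm2_ext => l hl; have [-> [-> ->]] := H l hl; by [].
Qed.

Lemma rnn_norm2_ge0 (t : rnn R d) : 0 <= rnn_norm2 L t.
Proof.
rewrite /rnn_norm2; apply: addr_ge0; first by apply: addr_ge0; apply: frob2_ge0.
by apply: sumr_ge0 => l _; rewrite !addr_ge0 ?frob2_ge0.
Qed.

Lemma norm2_gap (A B C : rnn R d) :
  (forall l, (l < L)%N ->
    (forall i j, Wff C l i j ^+ 2 = Wff A l i j * Wff B l i j) /\
    (forall i j, Wrec C l.+1 i j ^+ 2 = Wrec A l.+1 i j * Wrec B l.+1 i j) /\
    (forall i j, bias C l i j ^+ 2 = bias A l i j * bias B l i j)) ->
  rnn_norm2 L A + rnn_norm2 L B = rnn_norm2 L C *+ 2 + rnn_norm2 L (rsub A B).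
Proof.
move=> H; rewrite /rnn_norm2 /=.
have hL1 : (L.-1 < L)%N by rewrite prednK.
have [h1 [_ h3]] := H _ hL1.
have hs : \sum_(1 <= l < L) (frob2 (Wrec A l) + frob2 (Wff A l.-1) + frob2 (bias A l.-1))
  + \sum_(1 <= l < L) (frob2 (Wrec B l) + frob2 (Wff B l.-1) + frob2 (bias B l.-1))
  = (\sum_(1 <= l < L) (frob2 (Wrec C l) + frob2 (Wff C l.-1) + frob2 (bias C l.-1))) *+ 2
  + \sum_(1 <= l < L) (frob2 (Wrec A l - Wrec B l) + frob2 (Wff A l.-1 - Wff B l.-1)
       + frob2 (bias A l.-1 - bias B l.-1)).
  rewrite -big_split -sumrMnl -big_split /=; apply: eq_big_nat => l /andP[l1 l2].
  have hl : (l.-1 < L)%N by rewrite (leq_ltn_trans (leq_pred l)).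
  have [g1 [g2 g3]] := H _ hl; rewrite prednK in g2 => //.
  have e1 := frob2_gap g1; have e2 := frob2_gap g2; have e3 := frob2_gap g3.
  lra.
have e1 := frob2_gap h1; have e3 := frob2_gap h3.
lra.
Qed.

Lemma norm2_zero_bias (t : rnn R d) : rnn_norm2 L t = 0 ->
  forall k, (k < L)%N -> frob2 (bias t k) = 0.
Proof.
move=> H k hk; apply/eqP; rewrite eq_le frob2_ge0 andbT.
have hg l : 0 <= frob2 (Wrec t l) + frob2 (Wff t l.-1) + frob2 (bias t l.-1).
  by rewrite !addr_ge0 ?frob2_ge0.
have hS : 0 <= \sum_(1 <= l < L) (frob2 (Wrec t l) + frob2 (Wff t l.-1) + frob2 (bias t l.-1)).
  by apply: sumr_ge0.
have hw := frob2_ge0 (Wff t L.-1).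
move: H; rewrite /rnn_norm2.
have [->|hne] := eqVneq k L.-1; first by move=> H; lra.
have hk1 : k.+1 \in index_iota 1 L.
  rewrite mem_index_iota /=; move: hk hne; case: L => // n /=.
  by rewrite ltnS leq_eqVlt => /orP[/eqP->|]; rewrite ?eqxx.
rewrite (bigD1_seq _ hk1 (iota_uniq _ _)) /=.
have hS' : 0 <= \sum_(i <- index_iota 1 L | i != k.+1)
   (frob2 (Wrec t i) + frob2 (Wff t i.-1) + frob2 (bias t i.-1)).
  by apply: sumr_ge0.
have := frob2_ge0 (bias t L.-1); have := frob2_ge0 (Wrec t k.+1);
have := frob2_ge0 (Wff t k).
move=> *; lra.
Qed.

End T.
Section U.
Variable R : realType.
Variable d : nat -> nat.
Variable L : nat.
Hypothesis hL : (0 < L)%N.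

Lemma one_pd n : (1%:M : 'M[R]_n) = perm_mx 1 *m diag_mx (const_mx 1).
Proof. by rewrite perm_mx1 mul1mx diag_const_mx. Qed.

Lemma Gs_dec (P : mxseq R d) : in_Gscaled L P -> forall l, (l <= L)%N ->
  exists s, (forall i, 0 < Dv (P l) 0 i) /\ P l = perm_mx s *m diag_mx (Dv (P l)).
Proof.
move=> [[P0 [PL _]] H] l hl.
have [s [D [HD ->]]] : exists (s : 'S_(d l)) (D : 'rV[R]_(d l)),
    (forall i, 0 < D 0 i) /\ P l = perm_mx s *m diag_mx D.
  have [->|l0] := eqVneq l 0%N; first by exists 1%g, (const_mx 1); rewrite P0 -one_pd; split => // i; rewrite mxE.
  have [->|lL] := eqVneq l L; first by exists 1%g, (const_mx 1); rewrite PL -one_pd; split => // i; rewrite mxE.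
  apply: H; rewrite lt0n l0 /= ltn_neqAle lL hl //.
by exists s; rewrite DvE.
Qed.

Lemma unit_of (P : mxseq R d) : in_Gscaled L P -> forall l, (l <= L)%N -> P l \in unitmx.
Proof.
move=> HP l hl; have [s [HD ->]] := Gs_dec HP hl.
by apply: unit_pd => i; rewrite gt_eqF.
Qed.

Lemma norm_act_scale (P : mxseq R d) (t : rnn R d) : in_Gscaled L P ->
  rnn_norm2 L (rnn_act P t) = rnn_norm2 L (scale (fun l => Dv (P l)) t).
Proof.
move=> HP; apply: norm2_ext => // l hl /=.
have [s0 [H0 E0]] := Gs_dec HP (ltnW hl).
have [s1 [H1 E1]] := Gs_dec HP hl.
set D0 := Dv (P l) in H0 E0 *; set D1 := Dv (P l.+1) in H1 E1 *.
rewrite E0 E1; split; [|split].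
- by rewrite frob2_act // => i; rewrite gt_eqF.
- by rewrite frob2_act // => i; rewrite gt_eqF.
- by rewrite frob2_actb.
Qed.

Lemma pd_inv n (s1 s2 : 'S_n) (D : 'rV[R]_n) : (forall i, D 0 i != 0) ->
  perm_mx s1 *m diag_mx D *m invmx (perm_mx s2 *m diag_mx D) = perm_mx (s1 * s2^-1).
Proof.
move=> HD; rewrite invmx_pd // mulmxA -(mulmxA _ (diag_mx D)) mulmx_diag.
have -> : \row_j (D 0 j * Dinv D 0 j) = const_mx 1.
  by apply/matrixP => i j; rewrite !mxE divff.
by rewrite diag_const_mx mulmx1 perm_mxM.
Qed.

End U.
Unset Implicit Arguments.
Set Strict Implicit.
Theorem mainTheorem4 (R : realType) (L : nat) (d : nat -> nat) (t : rnn R d)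
  (hL : (0 < L)%N)
  (hb : forall l, (l < L)%N -> forall i, bias t l i 0 != 0) :
  forall t' t'' : rnn R d, in_X L t t' -> in_X L t t'' ->
  exists P : mxseq R d, in_Gperm L P /\ rnn_eq L t' (rnn_act P t'').
Proof.
move=> t' t'' [[P1 [G1 E1]] M1] [[P2 [G2 E2]] M2].
pose d1 := fun l => Dv (P1 l); pose d2 := fun l => Dv (P2 l).
have pos1 l : (l <= L)%N -> forall i, 0 < d1 l 0 i.
  by move=> hl; have [s [H _]] := Gs_dec G1 hl.
have pos2 l : (l <= L)%N -> forall i, 0 < d2 l 0 i.
  by move=> hl; have [s [H _]] := Gs_dec G2 hl.
pose dS := fun l => \row_j Num.sqrt (d1 l 0 j * d2 l 0 j).
have posS l : (l <= L)%N -> forall i, 0 < dS l 0 i.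
  by move=> hl i; rewrite mxE sqrtr_gt0 mulr_gt0 ?pos1 ?pos2.
pose S : mxseq R d := fun l => perm_mx 1 *m diag_mx (dS l).
have [[P10 [P1L _]] _] := G1; have [[P20 [P2L _]] _] := G2.
have S1 l : P1 l = 1%:M -> P2 l = 1%:M -> S l = 1%:M.
  move=> h1 h2; rewrite /S /dS /d1 /d2 h1 h2 one_pd DvE.
  have -> : \row_(j < d l) Num.sqrt ((const_mx 1 : 'rV[R]_(d l)) 0 j * (const_mx 1 : 'rV[R]_(d l)) 0 j) = const_mx 1.
    by apply/matrixP => i j; rewrite !mxE mulr1 sqrtr1.
  by rewrite -one_pd.
have GS : in_Gscaled L S.
  split; [split; [|split]|].
  - exact: S1.
  - exact: S1.
  - move=> l /andP[_ hl]; apply: unit_pd => i; rewrite gt_eqF //; apply: posS; exact: ltnW.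
  - move=> l /andP[_ hl]; exists 1%g, (dS l); split => //; apply: posS; exact: ltnW.
pose N := @rnn_norm2 R d L.
have n1 : N t' = N (scale d1 t) by rewrite /N (norm2_eq hL E1) (norm_act_scale hL).
have n2 : N t'' = N (scale d2 t) by rewrite /N (norm2_eq hL E2) (norm_act_scale hL).
have nS : N (rnn_act S t) = N (scale dS t).
  rewrite /N (norm_act_scale hL) //.
  have -> : (fun l => Dv (S l)) = dS by apply: functional_extensionality_dep => l; rewrite DvE.
  by [].
have mono (x y : rnn R d) : rnn_norm L x <= rnn_norm L y -> N x <= N y.
  by rewrite /rnn_norm ler_sqrt // rnn_norm2_ge0.
have h1S := mono _ _ (M1 _ GS).
have h12 := mono _ _ (M1 _ G2); rewrite /N -(norm2_eq hL E2) in h12.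
have h21 := mono _ _ (M2 _ G1); rewrite /N -(norm2_eq hL E1) in h21.
have gapL (e1 e2 : forall l, 'rV[R]_(d l)) :
    (forall l, (l <= L)%N -> forall i, 0 < e1 l 0 i) ->
    (forall l, (l <= L)%N -> forall i, 0 < e2 l 0 i) ->
    N (scale e1 t) + N (scale e2 t) =
    N (scale (fun l => \row_j Num.sqrt (e1 l 0 j * e2 l 0 j)) t) *+ 2
      + N (rsub (scale e1 t) (scale e2 t)).
  move=> q1 q2; apply: norm2_gap => // l hl; have hl' := ltnW hl.
  split; [|split] => i j; rewrite !mxE.
  - by rewrite entry_rel ?q1 ?q2.
  - by rewrite entry_rel ?q1 ?q2.
  - by rewrite entry_relb ?q1 ?q2.
have gap := gapL d1 d2 pos1 pos2.
have hG := rnn_norm2_ge0 L (rsub (scale d1 t) (scale d2 t)).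
have G0 : N (rsub (scale d1 t) (scale d2 t)) = 0.
  rewrite /N in n1 n2 nS h1S h12 h21 gap *; lra.
have deq k : (k < L)%N -> d1 k.+1 = d2 k.+1.
  move=> hk; have F := frob2_eq0 (norm2_zero_bias G0 hk).
  apply/matrixP => a j; rewrite ord1; have := F j 0; rewrite !mxE.
  by move/eqP; rewrite subr_eq0 => /eqP /(mulIf (hb k hk j)).
pose Q : mxseq R d := fun l => P1 l *m invmx (P2 l).
have u1 l : (l <= L)%N -> P1 l \in unitmx by apply: unit_of.
have u2 l : (l <= L)%N -> P2 l \in unitmx by apply: unit_of.
have uQ l : (l <= L)%N -> Q l \in unitmx.
  by move=> hl; rewrite unitmx_mul unitmx_inv u1 ?u2.
have QP l : (l <= L)%N -> Q l *m P2 l = P1 l by move=> hl; rewrite /Q mulmxKV ?u2.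
have iQ l : (l <= L)%N -> invmx (P2 l) *m invmx (Q l) = invmx (P1 l).
  by move=> hl; rewrite -invmxM ?uQ ?u2 // QP.
exists Q; split.
  split; first split.
  - by rewrite /Q P10 P20 invmx1 mulmx1.
  split; first by rewrite /Q P1L P2L invmx1 mulmx1.
    by move=> l /andP[_ hl]; apply: uQ; apply: ltnW.
  move=> [|k] // /andP[_ hk].
  have [s1 [p1 e1]] := Gs_dec G1 (ltnW hk).
  have [s2 [p2 e2]] := Gs_dec G2 (ltnW hk).
  rewrite /Q e1 e2 -/(d1 k.+1) -/(d2 k.+1) (deq k (ltnW hk)) pd_inv.
    exact: perm_mx_is_perm.
  by move=> i; rewrite -(deq k (ltnW hk)) gt_eqF // pos1 // ltnW.
move=> l hl; have [a1 [a2 a3]] := E1 l hl; have [b1 [b2 b3]] := E2 l hl.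
rewrite /rnn_act /= a1 a2 a3 b1 b2 b3.
split; [|split].
- by rewrite !mulmxA QP // -mulmxA iQ // ltnW.
- by rewrite !mulmxA QP // -mulmxA iQ.
- by rewrite mulmxA QP.
Qed.
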